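(* Let $P$ be a finite set of points in $\mathbb{R}^m$, let $(A,B)$ be an optimal 2-means partition of $P$, let $S\subseteq A$ be the set of low-revenue points of $A$, assume $S\ne\emptyset$, and let $x\in\arg\max_{u\in S}d(u,\rho(A))$. Then for every $u\in S$, $d(u,\rho(B))\le\frac{11}{9}d(x,\rho(A))$.
   Context: Distances are Euclidean: $d(x,y)=\|x-y\|_2$. For finite nonempty $S$, $\rho(S)=\frac{1}{|S|}\sum_{u\in S}u$ and $\Delta_1(S)=\sum_{u\in S}d(u,\rho(S))^2$. A partition $(A,B)$ of $P$ into two nonempty sets is an optimal 2-means partition if it minimizes $\Delta_1(A)+\Delta_1(B)$ among all partitions of $P$ into two nonempty sets. For $i\in A$, $j\in B$, $rev(i,j)=\min\{d(i,j)/\max\{d(i,\rho(A)),d(j,\rho(B))\},\,1\}$ (equal to $1$ if the maximum is $0$). For $u\in A$, $HR_B(u)=\{v\in B: rev(u,v)\ge\frac{1}{10}\}$. A point $u\in A$ is a high-revenue point if $|HR_B(u)|\ge\frac12|B|$, and a low-revenue point otherwise. *)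

(* Defs.v *)
From HB Require Import structures.
From mathcomp Require Import all_boot all_order all_algebra.
From mathcomp Require Import reals.
Set Implicit Arguments. Unset Strict Implicit. Unset Printing Implicit Defensive.
Import Order.TTheory GRing.Theory Num.Theory.
Local Open Scope ring_scope.

Section KMeans.
Variables (R : realType) (m n : nat).

Definition dist (x y : 'rV[R]_m) : R := Num.sqrt (\sum_(k < m) (x 0 k - y 0 k) ^+ 2).

(* The point set P = {p i | i < n}, p injective; subsets of P are sets of indices. *)
Variable p : 'I_n -> 'rV[R]_m.

Definition rho (S : {set 'I_n}) : 'rV[R]_m := (#|S|%:R)^-1 *: \sum_(i in S) p i.

Definition Delta1 (S : {set 'I_n}) : R := \sum_(i in S) dist (p i) (rho S) ^+ 2.

Definition optimal_2means (A : {set 'I_n}) : Prop :=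
  A != set0 /\ ~: A != set0 /\
  forall A' : {set 'I_n}, A' != set0 -> ~: A' != set0 ->
    Delta1 A + Delta1 (~: A) <= Delta1 A' + Delta1 (~: A').

Definition rev (A B : {set 'I_n}) (i j : 'I_n) : R :=
  let M := Num.max (dist (p i) (rho A)) (dist (p j) (rho B)) in
  if M == 0 then 1 else Num.min (dist (p i) (p j) / M) 1.

Definition HR (A B : {set 'I_n}) (u : 'I_n) : {set 'I_n} :=
  [set v in B | 10%:R^-1 <= rev A B u v].

Definition high_revenue (A B : {set 'I_n}) (u : 'I_n) : bool :=
  (#|B|%:R / 2%:R <= #|HR A B u|%:R :> R).

Definition low_revenue (A B : {set 'I_n}) (u : 'I_n) : bool := ~~ high_revenue A B u.

End KMeans.

(* Main.v *)
Require Import Defs.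
From HB Require Import structures.
From mathcomp Require Import all_boot all_order all_algebra.
From mathcomp Require Import reals ring lra.
Import Order.TTheory GRing.Theory Num.Theory.
Local Open Scope ring_scope.
Section Aux.
Variables (R : realType) (m : nat).
Implicit Types a b : 'I_m -> R.

Lemma lagrange a b :
  \sum_i \sum_j (a i * b j - a j * b i) ^+ 2 =
  2%:R * ((\sum_i a i ^+ 2) * (\sum_i b i ^+ 2) - (\sum_i a i * b i) ^+ 2).
Proof.
have E : forall i j, (a i * b j - a j * b i) ^+ 2 =
   (a i ^+ 2 * b j ^+ 2 + a j ^+ 2 * b i ^+ 2) - 2%:R * ((a i * b i) * (a j * b j)).
  by move=> i j; ring.
under eq_bigr do under eq_bigr do rewrite E.
under eq_bigr do rewrite sumrB big_split /=.
rewrite sumrB big_split /=.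
rewrite expr2 mulr_suml mulr_suml.
under [X in _ = _ * (_ - X)]eq_bigr do rewrite mulr_sumr.
under [X in _ = _ * (X - _)]eq_bigr do rewrite mulr_sumr.
have -> : \sum_i \sum_j a j ^+ 2 * b i ^+ 2 = \sum_i \sum_j a i ^+ 2 * b j ^+ 2.
  by rewrite exchange_big.
under [X in _ - X = _]eq_bigr do rewrite -mulr_sumr.
rewrite -mulr_sumr.
ring.
Qed.

Lemma cs a b : \sum_i a i * b i <= Num.sqrt (\sum_i a i ^+ 2) * Num.sqrt (\sum_i b i ^+ 2).
Proof.
have hA : 0 <= \sum_i a i ^+ 2 by apply: sumr_ge0 => i _; exact: sqr_ge0.
have hB : 0 <= \sum_i b i ^+ 2 by apply: sumr_ge0 => i _; exact: sqr_ge0.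
have h0 : 0 <= \sum_i \sum_j (a i * b j - a j * b i) ^+ 2.
  by apply: sumr_ge0 => i _; apply: sumr_ge0 => j _; exact: sqr_ge0.
rewrite lagrange in h0.
rewrite -sqrtrM //.
apply: (le_trans (ler_norm _)).
rewrite -sqrtr_sqr ler_sqrt; last exact: mulr_ge0.
lra.
Qed.

Lemma tri a b : Num.sqrt (\sum_i (a i + b i) ^+ 2) <=
   Num.sqrt (\sum_i a i ^+ 2) + Num.sqrt (\sum_i b i ^+ 2).
Proof.
have hA : 0 <= \sum_i a i ^+ 2 by apply: sumr_ge0 => i _; exact: sqr_ge0.
have hB : 0 <= \sum_i b i ^+ 2 by apply: sumr_ge0 => i _; exact: sqr_ge0.
rewrite -(@ler_sqr _ (Num.sqrt _)) ?nnegrE ?addr_ge0 ?sqrtr_ge0 //.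
rewrite sqr_sqrtr; last by apply: sumr_ge0 => i _; exact: sqr_ge0.
have E : forall i, (a i + b i) ^+ 2 = a i ^+ 2 + b i ^+ 2 + 2%:R * (a i * b i).
  by move=> i; ring.
under eq_bigr do rewrite E.
rewrite !big_split /= -mulr_sumr.
have := cs a b.
have := sqr_sqrtr hA; have := sqr_sqrtr hB.
move: (Num.sqrt _) (Num.sqrt _) (\sum_i a i * b i) => x y z hy hx hc.
rewrite -hx -hy. nra.
Qed.
End Aux.

Section D.
Variables (R : realType) (m n : nat) (p : 'I_n -> 'rV[R]_m).

Lemma dist_tri (x y z : 'rV[R]_m) : dist x z <= dist x y + dist y z.
Proof.
rewrite /dist.
have := @tri _ _ (fun k => x 0 k - y 0 k) (fun k => y 0 k - z 0 k).
by under eq_bigr do rewrite subrKA.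
Qed.

Lemma dist_sym (x y : 'rV[R]_m) : dist x y = dist y x.
Proof. by rewrite /dist; under eq_bigr do rewrite -sqrrN opprB. Qed.

Lemma dist_ge0 (x y : 'rV[R]_m) : 0 <= dist x y.
Proof. exact: sqrtr_ge0. Qed.

Lemma dist2 (x y : 'rV[R]_m) : dist x y ^+ 2 = \sum_(k < m) (x 0 k - y 0 k) ^+ 2.
Proof. by rewrite sqr_sqrtr //; apply: sumr_ge0 => i _; exact: sqr_ge0. Qed.

Lemma distxx (x : 'rV[R]_m) : dist x x = 0.
Proof. by rewrite /dist big1 ?sqrtr0 // => k _; rewrite subrr expr0n. Qed.

Lemma centroid_min (S : {set 'I_n}) (c : 'rV[R]_m) :
  Delta1 p S <= \sum_(i in S) dist (p i) c ^+ 2.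
Proof.
rewrite /Delta1.
under eq_bigr do rewrite dist2.
under [X in _ <= X]eq_bigr do rewrite dist2.
rewrite exchange_big [X in _ <= X]exchange_big /=.
apply: ler_sum => k _.
set r := rho p S 0 k.
set N := (#|S|%:R : R).
have hs : \sum_(i in S) p i 0 k = N * r.
  rewrite /r /rho mxE summxE /N.
  have [S0|Sn0] := eqVneq #|S| 0%N.
    rewrite S0 mul0r; apply: big_pred0 => i; apply/negbTE.
    by move/cards0_eq: S0 => ->; rewrite inE.
  by rewrite mulrA mulfV ?mul1r // pnatr_eq0.
set c' := c 0 k.
have E : forall i, (p i 0 k - c') ^+ 2 = (p i 0 k - r) ^+ 2 + (2%:R * (r - c') * p i 0 k - (r ^+ 2 - c' ^+ 2)).
  by move=> i; ring.
under [X in _ <= X]eq_bigr do rewrite E.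
rewrite big_split /= sumrB -mulr_sumr hs sumr_const -[_ *+ #|S|]mulr_natr -/N.
have hN : 0 <= N by rewrite /N ler0n.
rewrite lerDl.
have -> : 2%:R * (r - c') * (N * r) - (r ^+ 2 - c' ^+ 2) * N = N * (r - c') ^+ 2 by rewrite /r /c'; ring.
by apply: mulr_ge0 => //; exact: sqr_ge0.
Qed.

Lemma voronoi (A : {set 'I_n}) (v : 'I_n) : optimal_2means p A -> v \notin A ->
  dist (p v) (rho p (~: A)) <= dist (p v) (rho p A).
Proof.
move=> [hA [hB hopt]] vA.
have vB : v \in ~: A by rewrite inE.
have [B0|Bn0] := eqVneq (~: A :\ v) set0.
  have -> : ~: A = [set v].
    apply/setP => i; rewrite inE; apply/idP/idP.
      move=> iB; apply/set1P/eqP; apply/negPn/negP => iv.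
      have : i \in ~: A :\ v by rewrite !inE iv iB.
      by rewrite B0 inE.
    by move/set1P => ->.
  rewrite /rho cards1 big_set1 invr1 scale1r distxx; exact: dist_ge0.
have h := hopt (v |: A).
have e : ~: (v |: A) = ~: A :\ v by rewrite setCU setDE setIC.
rewrite e in h.
have hne : v |: A != set0 by apply/set0Pn; exists v; rewrite !inE eqxx.
have h' := h hne Bn0.
have h1 : Delta1 p (v |: A) <= Delta1 p A + dist (p v) (rho p A) ^+ 2.
  apply: (le_trans (centroid_min _ (rho p A))).
  by rewrite big_setU1 //= addrC.
have h2 : dist (p v) (rho p (~: A)) ^+ 2 + Delta1 p (~: A :\ v) <= Delta1 p (~: A).
  rewrite [Delta1 p (~: A)]/Delta1 (bigD1 v) //=; rewrite lerD2l.
  apply: (le_trans (centroid_min _ (rho p (~: A)))).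
  by rewrite le_eqVlt; apply/orP; left; apply/eqP; apply: eq_bigl => i; rewrite !inE andbC.
rewrite -(@ler_sqr _ (dist _ _)) ?nnegrE ?dist_ge0 //.
lra.
Qed.
End D.

Theorem mainTheorem7 (R : realType) (m n : nat) (p : 'I_n -> 'rV[R]_m)
  (p_inj : injective p) (A : {set 'I_n})
  (hopt : optimal_2means p A)
  (S : {set 'I_n})
  (hS : S = [set u in A | low_revenue p A (~: A) u])
  (hSne : S != set0)
  (x : 'I_n) (hxS : x \in S)
  (hxmax : forall u, u \in S -> dist (p u) (rho p A) <= dist (p x) (rho p A)) :
  forall u, u \in S ->
    dist (p u) (rho p (~: A)) <= 11%:R / 9%:R * dist (p x) (rho p A).
Proof.
move=> u uS.
have hD := hxmax u uS.
move: uS; rewrite hS inE => /andP [uA ulow].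
have : ~~ (~: A \subset HR p A (~: A) u).
  apply/negP => sub; move: ulow; rewrite /low_revenue /high_revenue.
  have := subset_leq_card sub; rewrite -(ler_nat R) => hc.
  have h0 : (0 : R) <= #|~: A|%:R by rewrite ler0n.
  move/negP; apply; lra.
case/subsetPn => v vB vHR.
move: vHR; rewrite /HR inE vB /= /Defs.rev.
set a := dist (p u) (rho p A).
set b := dist (p v) (rho p (~: A)).
set D := dist (p x) (rho p A).
set M := Num.max a b.
have ha : 0 <= a by exact: dist_ge0.
have hb : 0 <= b by exact: dist_ge0.
have [M0|Mn0] := eqVneq M 0.
  by move/negP => H; exfalso; apply: H; lra.
rewrite le_min negb_and.
have hM : 0 < M by rewrite lt_neqAle eq_sym Mn0 /M le_max ha.
have -> : ((10%:R : R)^-1 <= 1) = true by apply/idP; lra.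
rewrite orbF -ltNge ltr_pdivrMr //= => hduv.
have hv : v \notin A by rewrite inE in vB.
have hvor := @voronoi _ _ _ p A v hopt hv.
have t1 := @dist_tri _ _ (p v) (p u) (rho p A).
have t2 := @dist_tri _ _ (p u) (p v) (rho p (~: A)).
rewrite (@dist_sym _ _ (p v) (p u)) in t1.
have hd : 0 <= dist (p u) (p v) by exact: dist_ge0.
rewrite -/a -/b in t1 t2 hvor; rewrite -/a -/D in hD.
have [hab|hab] := leP a b.
  rewrite /M (max_r hab) in hduv.
  lra.
rewrite /M (max_l (ltW hab)) in hduv.
lra.
Qed.
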